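(* Let $\Omega\subset\mathbb R^3$ be a bounded domain and $T'>0$. For $\alpha>0$ let $W_{\mathrm{sg},\alpha}(\varphi):=\alpha\big((1+\alpha+\varphi)\ln(1+\alpha+\varphi)+(1+\alpha-\varphi)\ln(1+\alpha-\varphi)\big)$ for $|\varphi|\le1+\alpha$ (with $0\ln0=0$), and define on $L^2(0,T';L^2(\Omega))$ $$\mathcal E_{\mathrm{sg},\alpha}(\varphi):=\begin{cases}\int_0^{T'}\!\int_\Omega W_{\mathrm{sg},\alpha}(\varphi)\,dx\,d\tau&\text{if }|\varphi|\le1+\alpha\text{ a.e. in }\Omega\times(0,T'),\\+\infty&\text{otherwise},\end{cases}\qquad \mathcal I_K(\varphi):=\begin{cases}0&\varphi\in K,\\+\infty&\varphi\notin K,\end{cases}$$ with $K:=\{\varphi\in L^2(0,T';L^2(\Omega)):|\varphi|\le1\text{ a.e. in }\Omega\times(0,T')\}$. Then $\mathcal E_{\mathrm{sg},\alpha}\to\mathcal I_K$ in the sense of Mosco in $L^2(0,T';L^2(\Omega))$ as $\alpha\searrow0$, i.e.: (M1) for every family $\varphi_\alpha\rightharpoonup\varphi$ weakly in $L^2(0,T';L^2(\Omega))$, $\liminf_{\alpha\searrow0}\mathcal E_{\mathrm{sg},\alpha}(\varphi_\alpha)\ge\mathcal I_K(\varphi)$; (M2) for every $\varphi\in L^2(0,T';L^2(\Omega))$ there is a family $\varphi_\alpha\to\varphi$ strongly in $L^2(0,T';L^2(\Omega))$ with $\limsup_{\alpha\searrow0}\mathcal E_{\mathrm{sg},\alpha}(\varphi_\alpha)\le\mathcal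 I_K(\varphi)$. *)

(* Defs.v *)
From HB Require Import structures.
From mathcomp Require Import all_boot all_order all_algebra.
From mathcomp Require Import all_classical all_reals all_analysis.
Set Implicit Arguments. Unset Strict Implicit. Unset Printing Implicit Defensive.
Import Order.TTheory GRing.Theory Num.Theory numFieldNormedType.Exports.
Local Open Scope classical_set_scope.
Local Open Scope ring_scope.

Section defs.
Variable R : realType.

Definition R3 := ((R * R) * R)%type.
Definition ST := (R3 * R)%type.

Definition leb3 := ((@lebesgue_measure R \x @lebesgue_measure R)
                      \x @lebesgue_measure R)%E.
Definition lebST := (leb3 \x @lebesgue_measure R)%E.

Definition cyl (Om : set R3) (T' : R) : set ST := Om `*` `]0, T'[%classic.

(* membership in L^2(0,T';L^2(Omega)) = L^2(Omega x (0,T')) (representatives) *)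
Definition L2 (Om : set R3) (T' : R) (f : ST -> R) : Prop :=
  measurable_fun (cyl Om T') f /\
  (\int[lebST]_(z in cyl Om T') ((f z) ^+ 2)%:E < +oo)%E.

Definition weak_cvg0 (Om : set R3) (T' : R) (phi : R -> ST -> R) (f : ST -> R) :=
  forall psi : ST -> R, L2 Om T' psi ->
    (fun a => Rintegral lebST (cyl Om T') (fun z => phi a z * psi z))
      @ 0^'+ --> Rintegral lebST (cyl Om T') (fun z => f z * psi z).

Definition strong_cvg0 (Om : set R3) (T' : R) (phi : R -> ST -> R) (f : ST -> R) :=
  (fun a => (\int[lebST]_(z in cyl Om T') ((phi a z - f z) ^+ 2)%:E)%E)
    @ 0^'+ --> 0%E.

Definition xlnx (x : R) : R := if x == 0 then 0 else x * ln x.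

Definition Wsg (a x : R) : R := a * (xlnx (1 + a + x) + xlnx (1 + a - x)).

Definition Esg (Om : set R3) (T' : R) (a : R) (f : ST -> R) : \bar R :=
  if `[< {ae lebST, forall z, cyl Om T' z -> `|f z| <= 1 + a} >]
  then (\int[lebST]_(z in cyl Om T') (Wsg a (f z))%:E)%E
  else +oo%E.

Definition Kset (Om : set R3) (T' : R) : set (ST -> R) :=
  [set f | L2 Om T' f /\ {ae lebST, forall z, cyl Om T' z -> `|f z| <= 1}].

Definition IK (Om : set R3) (T' : R) (f : ST -> R) : \bar R :=
  if `[< Kset Om T' f >] then 0%E else +oo%E.

End defs.

(* Main.v *)
Require Import Defs.
From HB Require Import structures.
From mathcomp Require Import all_boot all_order all_algebra.
From mathcomp Require Import all_classical all_reals all_analysis.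
From mathcomp Require Import ring lra.
Import Order.TTheory GRing.Theory Num.Theory numFieldNormedType.Exports.
Local Open Scope classical_set_scope.
Local Open Scope ring_scope.

Section real.
Variable R : realType.

Lemma xlnxE (x : R) : xlnx x = x * ln x.
Proof. by rewrite /xlnx; case: eqP => [->|//]; rewrite mul0r. Qed.

Lemma xlnx_ge (x : R) : -1 <= xlnx x.
Proof.
rewrite xlnxE; have [x0|x0] := leP x 0; first by rewrite ln0 // mulr0 lerN10.
have h := expR_ge1Dx (- ln x).
rewrite expRN lnK ?posrE // in h.
have : x * (1 - ln x) <= x * x^-1 by rewrite ler_pM2l.
rewrite mulfV ?gt_eqF //; nra.
Qed.

Lemma xlnx_le (x : R) : xlnx x <= x ^+ 2.
Proof.
rewrite xlnxE; have [x0|x0] := leP x 0; first by rewrite ln0 // mulr0 sqr_ge0.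
have h := expR_ge1Dx (ln x).
rewrite lnK ?posrE // in h.
rewrite expr2 ler_pM2l //; lra.
Qed.

Lemma Wsg_ge (a x : R) : 0 <= a -> - (2 * a) <= Wsg a x.
Proof.
move=> a0; rewrite /Wsg; have h1 := xlnx_ge (1 + a + x); have h2 := xlnx_ge (1 + a - x).
nra.
Qed.

Lemma Wsg_le (a x : R) : 0 <= a -> a <= 1 -> `|x| <= 1 + a -> Wsg a x <= 32 * a.
Proof.
move=> a0 a1 xa; rewrite /Wsg; have h1 := xlnx_le (1 + a + x); have h2 := xlnx_le (1 + a - x).
move: xa; rewrite ler_norml => /andP [xa1 xa2].
have : xlnx (1 + a + x) + xlnx (1 + a - x) <= 32 by nra.
move=> h; nra.
Qed.

Lemma xlnx_meas : measurable_fun setT (@xlnx R).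
Proof.
rewrite (_ : @xlnx R = fun x : R => x * ln x); last by apply/funext => x; rewrite xlnxE.
by apply: measurable_realfun.measurable_funM => //; exact: measurable_ln.
Qed.

Lemma Wsg_meas (a : R) : measurable_fun setT (Wsg a).
Proof.
apply: measurable_realfun.measurable_funM => //; apply: measurable_realfun.measurable_funD.
  apply: (measurableT_comp xlnx_meas); apply: measurable_realfun.measurable_funD => //.
apply: (measurableT_comp xlnx_meas); apply: measurable_realfun.measurable_funB => //.
Qed.
End real.



Section filt.
Variable R : realType.

Lemma near_small (d : R) : (0 < d)%R -> 0^'+ [set a : R | (0 < a)%R /\ (a < d)%R].
Proof.
move=> d0; have h1 := @nbhs_right_gt R 0; have h2 := @nbhs_right_lt R 0 d d0.
by near=> a; split; near: a.
Unshelve. all: by end_near. Qed.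

Lemma esup_le0 (g : R -> \bar R) (c : R) :
  (forall a : R, (0 < a)%R -> (a <= 1)%R -> (g a <= (c * a)%:E)%E) -> (limf_esup g 0^'+ <= 0)%E.
Proof.
move=> hg; apply/lee_addgt0Pr => e e0; rewrite add0e.
pose d := Num.min 1%R (e / (`|c| + 1)).
have d0 : (0 < d)%R by rewrite lt_min ltr01 divr_gt0 // ltr_pwDr.
apply: le_trans (ereal_inf_lbound _) _.
  by exists [set a : R | (0 < a)%R /\ (a < d)%R]; first exact: near_small.
apply: ge_ereal_sup => _ [a [a0 ad] <-].
have ad1 : (a <= 1)%R by apply: ltW; apply: (lt_le_trans ad); rewrite ge_min lexx.
apply: le_trans (hg a a0 ad1) _; rewrite lee_fin.
have : (a <= e / (`|c| + 1))%R by apply: ltW; apply: (lt_le_trans ad); rewrite ge_min lexx orbT.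
rewrite ler_pdivlMr ?ltr_pwDr // => h.
have := ler_norm c; nra.
Qed.

Lemma einf_ge0 (g : R -> \bar R) (c : R) :
  (forall a : R, (0 < a)%R -> (a <= 1)%R -> ((- (c * a))%:E <= g a)%E) -> (0 <= limf_einf g 0^'+)%E.
Proof.
move=> hg; rewrite /limf_einf oppe_ge0; apply: (@esup_le0 _ c) => a a0 a1.
by rewrite /= leeNl -EFinN; exact: hg.
Qed.

Lemma einf_pinfty (g : R -> \bar R) :
  (\forall a \near 0^'+, g a = +oo%E) -> limf_einf g 0^'+ = +oo%E.
Proof.
move=> hP; rewrite /limf_einf.
suff -> : limf_esup (fun a => - g a)%E 0^'+ = -oo%E by [].
apply/eqP; rewrite -leeNy_eq.
apply: le_trans (ereal_inf_lbound _) _.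
  by exists (fun a => g a = +oo%E).
by apply: ge_ereal_sup => _ [a ha <-]; rewrite /= ha.
Qed.
End filt.



Section integ.
Context d (T : measurableType d) (R : realType) (mu : {measure set T -> \bar R}).
Variables (D : set T) (mD : measurable D).

Lemma int_lower (r : R) (hr : mu D = r%:E) (g : T -> R) (c : R) : measurable_fun D g -> 0 <= c ->
  (forall x, D x -> - c <= g x) ->
  ((- (c * r))%:E <= \int[mu]_(x in D) (g x)%:E)%E.
Proof.
move=> mg c0 hg; rewrite EFinN EFinM -hr integralE.
rewrite -[X in (X <= _)%E]sub0e; apply: leeB; first exact: integral_ge0.
rewrite -(@integral_cst _ _ _ mu D mD c%:E); apply: (ge0_le_integral mu mD).
- by move=> x _; exact: funeneg_ge0.
- by apply: measurable_realfun.measurable_funeneg; exact/measurable_realfun.measurable_EFinP.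
- exact: measurable_cst.
- move=> x Dx; rewrite funenegE /= ge_max.
  by rewrite !lee_fin c0 andbT lerNl; exact: hg.
Qed.

Lemma int_upper (r : R) (hr : mu D = r%:E) (g : T -> R) (c : R) : measurable_fun D g -> 0 <= c ->
  {ae mu, forall x, D x -> g x <= c} ->
  (\int[mu]_(x in D) (g x)%:E <= (c * r)%:E)%E.
Proof.
move=> mg c0 hg; rewrite EFinM -hr integralE.
rewrite -[X in (_ <= X)%E]sube0; apply: leeB; last exact: integral_ge0.
rewrite -(@integral_cst _ _ _ mu D mD c%:E); apply: (ae_ge0_le_integral mD).
- by move=> x _; exact: funepos_ge0.
- by apply: measurable_realfun.measurable_funepos; exact/measurable_realfun.measurable_EFinP.
- by move=> x _; rewrite lee_fin.
- exact: measurable_cst.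
- apply: filterS hg => x h Dx; rewrite funeposE /= ge_max !lee_fin c0 andbT.
  exact: h.
Qed.
End integ.



Definition tpsi {T : Type} {R : realType} (E : set T) (s : R) (z : T) : R := s * \1_E z.

Section integ2.
Context d (T : measurableType d) (R : realType) (mu : {measure set T -> \bar R}).
Variables (D : set T) (mD : measurable D).
Variables (E : set T) (mE : measurable E) (ED : E `<=` D) (s : R) (hs : s ^+ 2 = 1).


Lemma int_cind (c : R) : 0 <= c ->
  (\int[mu]_(x in D) (c * \1_E x)%:E = c%:E * mu E)%E.
Proof.
move=> c0; under eq_integral do rewrite EFinM.
rewrite ge0_integralZl_EFin //.
- by rewrite integral_indic // setIidl.
by apply/measurable_realfun.measurable_EFinP; exact: measurable_realfun.measurable_indic.
Qed.

Lemma psi_meas : measurable_fun D (tpsi E s).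
Proof.
by apply: measurable_realfun.measurable_funM => //.
Qed.

Lemma abs_s : `|s| = 1.
Proof.
have : `|s| ^+ 2 = 1 by rewrite real_normK ?hs // num_real.
move=> h; have := normr_ge0 s; nra.
Qed.

Lemma psi_L2 : (mu D < +oo)%E -> (\int[mu]_(z in D) ((tpsi E s z) ^+ 2)%:E < +oo)%E.
Proof.
move=> muD; apply: le_lt_trans muD.
rewrite -[X in (_ <= X)%E]mul1e -(@integral_cst _ _ _ mu D mD 1%E).
apply: (ge0_le_integral mu mD).
- by move=> x _; rewrite lee_fin sqr_ge0.
- apply/measurable_realfun.measurable_EFinP.
  exact: (measurableT_comp (measurable_realfun.exprn_measurable 2) psi_meas).
- exact: measurable_cst.
- move=> x _; rewrite lee_fin /tpsi exprMn hs mul1r indicE.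
  by case: (x \in E); rewrite ?expr1n ?expr0n.
Qed.

Lemma test_lower (f : T -> R) (mf : measurable_fun D f) (dl N : R) (dl0 : 0 <= dl) (N0 : 0 <= N)
  (hE : forall z, E z -> dl <= s * f z <= N) (r : R) (hr : mu E = r%:E) :
  dl * r <= Rintegral mu D (fun z => f z * tpsi E s z).
Proof.
have muEE : mu E = (fine (mu E))%:E by rewrite hr.
have rE : r = fine (mu E) by rewrite hr.
rewrite rE.
have key : forall z, f z * tpsi E s z = (s * f z) * \1_E z by move=> z; rewrite /tpsi; ring.
have mfp : measurable_fun D (fun z => f z * tpsi E s z).
  by apply: measurable_realfun.measurable_funM => //; exact: psi_meas.
have lo : ((dl * fine (mu E))%:E <= \int[mu]_(x in D) (f x * tpsi E s x)%:E)%E.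
  rewrite EFinM -muEE -int_cind //; apply: (ge0_le_integral mu mD).
  - by move=> x _; rewrite lee_fin mulr_ge0.
  - by apply/measurable_realfun.measurable_EFinP; apply: measurable_realfun.measurable_funM.
  - exact/measurable_realfun.measurable_EFinP.
  - move=> x Dx; rewrite key lee_fin indicE.
    by case: (boolP (x \in E)) => [/set_mem /hE /andP [h _]|_]; rewrite ?mulr1 ?mulr0.
have up : (\int[mu]_(x in D) (f x * tpsi E s x)%:E <= (N * fine (mu E))%:E)%E.
  rewrite EFinM -muEE -int_cind //; apply: (ge0_le_integral mu mD).
  - move=> x Dx; rewrite key lee_fin indicE.
    case: (boolP (x \in E)) => [/set_mem /hE /andP [h _]|_]; rewrite ?mulr1 ?mulr0 //.
    exact: le_trans h.
  - exact/measurable_realfun.measurable_EFinP.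
  - by apply/measurable_realfun.measurable_EFinP; apply: measurable_realfun.measurable_funM.
  - move=> x Dx; rewrite key lee_fin indicE.
    by case: (boolP (x \in E)) => [/set_mem /hE /andP [_ h]|_]; rewrite ?mulr1 ?mulr0.
rewrite /Rintegral; move: lo up; case: (\int[mu]_(x in D) (f x * tpsi E s x)%:E)%E => [v||] //=.
Qed.

Lemma test_upper (g : T -> R) (mg : measurable_fun D g) (b : R) (b0 : 0 <= b)
  (hg : {ae mu, forall z, D z -> `|g z| <= b}) (r : R) (hr : mu E = r%:E) :
  Rintegral mu D (fun z => g z * tpsi E s z) <= b * r.
Proof.
have muEE : mu E = (fine (mu E))%:E by rewrite hr.
have rE : r = fine (mu E) by rewrite hr.
rewrite rE.
have mgp : measurable_fun D (fun z => g z * tpsi E s z).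
  by apply: measurable_realfun.measurable_funM => //; exact: psi_meas.
have h : (\int[mu]_(x in D) (g x * tpsi E s x)%:E <= (b * fine (mu E))%:E)%E.
  apply: le_trans (lee_abs _) _.
  apply: le_trans (le_abse_integral mu mD _) _.
    exact/measurable_realfun.measurable_EFinP.
  rewrite EFinM -muEE -int_cind //; apply: (ae_ge0_le_integral mD).
  - by move=> x _; exact: abse_ge0.
  - under eq_fun do rewrite abse_EFin.
    apply/measurable_realfun.measurable_EFinP.
    apply: measurableT_comp mgp; exact: measurable_realfun.normr_measurable.
  - by move=> x _; rewrite lee_fin mulr_ge0.
  - apply/measurable_realfun.measurable_EFinP.
    by apply: measurable_realfun.measurable_funM.
  - apply: filterS hg => x h Dx; rewrite abse_EFin lee_fin /tpsi !normrM abs_s mul1r indicE.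
    case: (x \in E); rewrite ?normr1 ?normr0 ?mulr1 ?mulr0 //.
    exact: h.
rewrite /Rintegral; move: h; case: (\int[mu]_(x in D) (g x * tpsi E s x)%:E)%E => [v||] //=.
by move=> _; rewrite mulr_ge0 // fine_ge0.
Qed.
End integ2.



Section cylsec.
Variable R : realType.

Lemma itv_fin (a b : R) : (lebesgue_measure (`]a, b[%classic : set R)) \is a fin_num.
Proof. by rewrite lebesgue_measure_itv /=; case: ifP. Qed.

Lemma box_fin (N : R) T' :
  (lebST ((((`]-N, N[%classic `*` `]-N, N[%classic) `*` `]-N, N[%classic) `*` `]0, T'[%classic) : set (ST R)))
  \is a fin_num.
Proof.
rewrite /lebST product_measure1E; last 2 first.
- by apply: measurableX; [apply: measurableX|]; exact: measurable_itv.
- exact: measurable_itv.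
rewrite fin_numM ?itv_fin //.
set I := `]-N, N[%classic.
have e : leb3 ((I `*` I) `*` I) = ((lebesgue_measure \x lebesgue_measure)%E (I `*` I) * lebesgue_measure I)%E.
  by apply: product_measure1E; [apply: measurableX|]; exact: measurable_itv.
suff h : ((lebesgue_measure \x lebesgue_measure)%E (I `*` I) * lebesgue_measure I)%E \is a fin_num.
  by move: h; rewrite -e; exact: id.
rewrite fin_numM ?itv_fin //.
have e2 : (lebesgue_measure \x lebesgue_measure)%E (I `*` I) = (lebesgue_measure I * lebesgue_measure I)%E.
  by apply: product_measure1E; exact: measurable_itv.
by rewrite e2 fin_numM ?itv_fin.
Qed.
Definition itv1 (c r : rat) : set R := `](ratr c - ratr r), (ratr c + ratr r)[%classic.
Definition box (q : ((rat * rat) * rat) * rat) : set (R3 R) :=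
  (itv1 q.1.1.1 q.2 `*` itv1 q.1.1.2 q.2) `*` itv1 q.1.2 q.2.

Lemma itv1_meas c r : measurable (itv1 c r).
Proof. exact: measurable_itv. Qed.

Lemma box_meas q : measurable (box q).
Proof. by apply: measurableX; [apply: measurableX|]; apply: itv1_meas. Qed.

Lemma ball_R (x y e : R) : ball x e y <-> `|x - y| < e.
Proof. by rewrite -ball_normE. Qed.

Lemma approx1 (x r : R) : 0 < r -> exists q : rat, `|x - ratr q| < r.
Proof.
move=> r0; have [|q] := @rat_in_itvoo R (x - r) (x + r).
  by rewrite ltrBlDr -addrA ltrDl addr_gt0.
by rewrite in_itv /= => h; exists q; rewrite ltr_distlC.
Qed.

Lemma countT : countable [set: ((rat * rat) * rat) * rat].
Proof. exact: countableP. Qed.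

Lemma box_mem (q : ((rat * rat) * rat) * rat) (y : R3 R) :
  box q y <-> [/\ `|ratr q.1.1.1 - y.1.1| < ratr q.2, `|ratr q.1.1.2 - y.1.2| < ratr q.2
     & `|ratr q.1.2 - y.2| < ratr q.2].
Proof.
rewrite /box /itv1 /=; rewrite !in_itv /= !ltr_distlC.
by split => [[[]]|[]].
Qed.

Lemma ball3 (x y : R3 R) e : 
  `|x.1.1 - y.1.1| < e -> `|x.1.2 - y.1.2| < e -> `|x.2 - y.2| < e -> ball x e y.
Proof. by move=> h1 h2 h3; split; [split|]; apply/ball_R. Qed.

Lemma open_R3_measurable (A : set (R3 R)) : open A -> measurable A.
Proof.
move=> oA.
pose B (q : ((rat * rat) * rat) * rat) : set (R3 R) :=
  if `[< box q `<=` A >] then box q else set0.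
have -> : A = \bigcup_q B q.
  apply/seteqP; split; last first.
    by move=> x [q _]; rewrite /B; case: ifPn => // /asboolP sub /sub.
  move=> x Ax.
  have : nbhs x A by move: oA; rewrite openE => /(_ x Ax).
  move=> /nbhs_ballP [e /= e0 eA].
  have [|r] := @rat_in_itvoo R 0 (e / 2); first by rewrite divr_gt0.
  rewrite in_itv /= => /andP [r0 re].
  have [q1 h1] := @approx1 x.1.1 (ratr r) r0.
  have [q2 h2] := @approx1 x.1.2 (ratr r) r0.
  have [q3 h3] := @approx1 x.2 (ratr r) r0.
  have key : forall (a c : R) (b : rat), `|a - ratr b| < ratr r -> `|ratr b - c| < ratr r -> `|a - c| < e.
    move=> a c b hab hbc; rewrite (_ : a - c = (a - ratr b) + (ratr b - c)); last by ring.
    rewrite (le_lt_trans (ler_normD _ _))//.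
    by rewrite (splitr e) ltrD // (lt_trans _ re).
  exists (((q1, q2), q3), r) => //.
  rewrite /B; case: ifPn => [_|/asboolP nsub].
    by apply/box_mem; split; rewrite /= distrC.
  exfalso; apply: nsub => y /box_mem [/= g1 g2 g3]; apply: eA.
  apply: ball3. exact: key h1 g1. exact: key h2 g2. exact: key h3 g3.
apply: countable_bigcupT_measurable; first exact: countT.
by move=> q; rewrite /B; case: ifPn => _; [exact: box_meas|exact: measurable0].
Qed.

Lemma cyl_meas (Om : set (R3 R)) T' : open Om -> measurable (cyl Om T').
Proof.
move=> oOm; apply: measurableX; first exact: open_R3_measurable.
exact: measurable_itv.
Qed.

Lemma cyl_fin (Om : set (R3 R)) T' : open Om -> bounded_set Om -> (lebST (cyl Om T') < +oo)%E.
Proof.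
move=> oOm [M [_ HM]].
have hM1 : M < `|M| + 1 by rewrite (le_lt_trans (ler_norm M)) // ltrDl.
have HB := HM _ hM1.
pose N := `|M| + 2.
pose Bx : set (ST R) := (((`]-N, N[%classic `*` `]-N, N[%classic) `*` `]-N, N[%classic) `*` `]0, T'[%classic).
have sub : cyl Om T' `<=` Bx.
  move=> [[[x1 x2] x3] t] [/= Ox tT]; split => //.
  have := HB _ Ox; rewrite /= !prod_normE /= !ge_max => /andP [/andP [h1 h2] h3].
  have hN : forall y : R, `|y| <= `|M| + 1 -> `]-N, N[%classic y.
    move=> y hy; rewrite /= in_itv /= -ltr_norml; apply: le_lt_trans hy _.
    by rewrite /N ltrD2l ltr1n.
  by split; [split|]; apply: hN.
have hle : (lebST (cyl Om T') <= lebST Bx)%E.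
  apply: le_measure; last exact: sub.
  - by rewrite inE; exact: cyl_meas.
  - rewrite inE; apply: measurableX; last exact: measurable_itv.
    by apply: measurableX; [apply: measurableX|]; exact: measurable_itv.
apply: le_lt_trans hle _.
by rewrite ltey_eq box_fin.
Qed.
End cylsec.




Lemma ae_mono (R : realType) (P Q : ST R -> Prop) : (forall z, P z -> Q z) ->
  {ae (@lebST R), forall z, P z} -> {ae (@lebST R), forall z, Q z}.
Proof.
move=> PQ [N [mN N0 sub]]; exists N; split => // z /= nQ; apply: sub => /= hP.
exact/nQ/PQ.
Qed.

Lemma near_contra (R : realType) (G : R -> R) (L r dl : R) (P : R -> Prop) :
  0 < r -> 0 < dl -> G @ 0^'+ --> L -> (1 + dl) * r <= L ->
  (forall a, 0 < a -> P a -> G a <= (1 + a) * r) -> \forall a \near 0^'+, ~ P a.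
Proof.
move=> r0 dl0 conv lowL hup.
have hd2 : dl / 2 < dl by rewrite ltr_pdivrMr // ltr_pMr // ltr1n.
have hz : (1 + dl / 2) * r < L.
  by apply: lt_le_trans lowL; rewrite ltr_pM2r // ltrD2l.
have ev : \forall t \near 0^'+, (1 + dl / 2) * r < G t.
  by apply: cvgr_gt; [exact: conv|exact: hz].
have h1 := @nbhs_right_gt R 0.
have h2 : \forall a \near 0^'+, a < dl / 2 by apply: nbhs_right_lt; rewrite divr_gt0.
near=> a => Pa.
have a0 : 0 < a by near: a.
have ad : a < dl / 2 by near: a.
have ga : (1 + dl / 2) * r < G a by near: a.
have c1 := lt_le_trans ga (hup a a0 Pa).
have c2 : (1 + a) * r < (1 + dl / 2) * r by rewrite ltr_pM2r // ltrD2l.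
by have := lt_trans c1 c2; rewrite ltxx.
Unshelve. all: by end_near.
Qed.

Theorem mainTheorem8 (R : realType) (Om : set (R3 R)) (T' : R)
  (Om_open : open Om) (Om_conn : connected Om) (Om_ne : Om !=set0)
  (Om_bdd : bounded_set Om) (T'_gt0 : 0 < T') :
  (* (M1) *)
  (forall (phi : R -> ST R -> R) (f : ST R -> R),
     (forall a, 0 < a -> L2 Om T' (phi a)) -> L2 Om T' f ->
     weak_cvg0 Om T' phi f ->
     (IK Om T' f <= limf_einf (fun a => Esg Om T' a (phi a)) 0^'+)%E) /\
  (* (M2) *)
  (forall f : ST R -> R, L2 Om T' f ->
     exists phi : R -> ST R -> R,
       (forall a, 0 < a -> L2 Om T' (phi a)) /\
       strong_cvg0 Om T' phi f /\
       (limf_esup (fun a => Esg Om T' a (phi a)) 0^'+ <= IK Om T' f)%E).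
Proof.
have mD : measurable (cyl Om T') by exact: cyl_meas.
have muD : (lebST (cyl Om T') < +oo)%E by exact: cyl_fin.
have muDE : lebST (cyl Om T') = (fine (lebST (cyl Om T')))%:E.
  by rewrite fineK // ge0_fin_numE.
set m := fine (lebST (cyl Om T')).
have m0 : 0 <= m by apply: fine_ge0.
split.
- move=> phi f hphi hf hw.
  rewrite /IK; case: asboolP => [fK|nfK].
  + apply: (@einf_ge0 _ _ (2 * m)) => a a0 a1.
    rewrite /Esg; case: asboolP => _; last by rewrite leey.
    apply: le_trans _ (@int_lower _ _ _ (@lebST R) _ mD m muDE (fun z => Wsg a (phi a z)) (2 * a) _ _ _).
    * by rewrite lee_fin (mulrAC 2 m a).
    * exact: measurableT_comp (@Wsg_meas R a) (hphi a a0).1.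
    * by rewrite mulr_ge0 // ltW.
    * by move=> z _; apply: Wsg_ge; exact: ltW.
  + have nae : ~ {ae (@lebST R), forall z, cyl Om T' z -> `|f z| <= 1}.
      by move=> h; apply: nfK; split.
    pose E (s : R) (n : nat) : set (ST R) :=
      cyl Om T' `&` (fun z => s * f z) @^-1` `]1 + n.+1%:R^-1, n%:R]%classic.
    have mE : forall s n, measurable (E s n).
      move=> s0 n0.
      have mg : measurable_fun (cyl Om T') (fun z => s0 * f z).
        by apply: measurable_realfun.measurable_funM => //; exact: hf.1.
      by apply: mg => //; exact: measurable_itv.
    have [s [n [hs hn]]] : exists s n, s ^+ 2 = 1 /\ @lebST R (E s n) != 0.
      case: (pselect (exists s n, s ^+ 2 = 1 /\ @lebST R (E s n) != 0)) => // H.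
      exfalso; apply: nae.
      have H0 : forall s0 n0, s0 ^+ 2 = 1 -> @lebST R (E s0 n0) = 0.
        by move=> s0 n0 hs0; apply/eqP; apply/negPn/negP => hn0; apply: H; exists s0, n0.
      have negE : forall s0 n0, s0 ^+ 2 = 1 -> (@lebST R).-negligible (E s0 n0).
        by move=> s0 n0 hs0; exists (E s0 n0); split; [exact: mE | exact: (H0 s0 n0 hs0) | by []].
      have hm1 : (-1 : R) ^+ 2 = 1 by rewrite sqrrN expr1n.
      have hp1 : (1 : R) ^+ 2 = 1 by rewrite expr1n.
      apply: (negligibleS _ (negligible_bigcup (fun n0 => negligibleU (negE 1 n0 hp1) (negE (-1) n0 hm1)))).
      move=> z /= nz.
      have [Dz|nDz] := pselect (cyl Om T' z); last by exfalso; apply: nz.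
      have fz1 : 1 < `|f z|.
        by rewrite ltNge; apply/negP => h; apply: nz.
      have fz0 : 0 < `|f z| - 1 by rewrite subr_gt0.
      pose n0 := Num.bound (`|f z| + (`|f z| - 1)^-1).
      have hb : `|f z| + (`|f z| - 1)^-1 < n0%:R.
        by apply: archi_boundP; rewrite addr_ge0 // ?invr_ge0 ltW.
      have hinv : 0 < (`|f z| - 1)^-1 by rewrite invr_gt0.
      have hin : `]1 + n0.+1%:R^-1, n0%:R]%classic `|f z|.
        rewrite /= in_itv /=; apply/andP; split; last first.
          by apply: ltW; apply: lt_trans hb; rewrite ltrDl.
        rewrite -ltrBrDl -[X in _ < X](invrK (`|f z| - 1)) ltf_pV2 ?posrE ?invr_gt0 //.
        apply: lt_trans (_ : n0%:R < _); last by rewrite ltr_nat.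
        by apply: lt_trans hb; rewrite ltrDr (lt_trans ltr01 fz1).
      exists n0 => //.
      have [f0|f0] := leP 0 (f z).
        by left; split => //=; rewrite mul1r -(ger0_norm f0).
      by right; split => //=; rewrite mulN1r -(ltr0_norm f0).
    have ED : E s n `<=` cyl Om T' by move=> z [].
    have muEfin : (@lebST R (E s n) < +oo)%E.
      apply: le_lt_trans muD; apply: le_measure; last exact: ED.
      - by rewrite inE; exact: mE.
      - by rewrite inE; exact: mD.
    set r := fine (@lebST R (E s n)).
    have rE : @lebST R (E s n) = r%:E by rewrite fineK // ge0_fin_numE.
    have r0 : 0 < r.
      rewrite lt0r fine_ge0 // andbT; move: hn; apply: contra => /eqP r00.
      by rewrite rE r00.
    pose dl : R := n.+1%:R^-1.
    have dl0 : 0 < dl by rewrite invr_gt0 ltr0n.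
    pose psi := tpsi (E s n) s.
    have L2psi : L2 Om T' psi.
      split; first exact: (@psi_meas _ _ R (cyl Om T') (E s n) (mE s n) s).
      exact: (@psi_L2 _ _ R (@lebST R) (cyl Om T') mD (E s n) (mE s n) s hs muD).
    have conv := hw psi L2psi.
    have lowL : (1 + dl) * r <= Rintegral (@lebST R) (cyl Om T') (fun z => f z * psi z).
      apply: (@test_lower _ _ R (@lebST R) (cyl Om T') mD (E s n) (mE s n) ED s f hf.1 (1 + dl) n%:R _ _ _ r rE).
      - by rewrite addr_ge0 // ltW.
      - exact: ler0n.
      - move=> z [_ /=]; rewrite in_itv /= => /andP [h1 h2]; rewrite h2 andbT; exact: ltW.
    have hup : forall a, 0 < a ->
        {ae (@lebST R), forall z, cyl Om T' z -> `|phi a z| <= 1 + a} ->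
        Rintegral (@lebST R) (cyl Om T') (fun z => phi a z * psi z) <= (1 + a) * r.
      move=> a a0 hb.
      apply: (@test_upper _ _ R (@lebST R) (cyl Om T') mD (E s n) (mE s n) ED s hs (phi a) (hphi a a0).1 (1 + a) _ hb r rE).
      by rewrite addr_ge0 // ltW.
    have nr := @near_contra R (fun a => Rintegral (@lebST R) (cyl Om T') (fun z => phi a z * psi z)) _ r dl
      (fun a => {ae (@lebST R), forall z, cyl Om T' z -> `|phi a z| <= 1 + a}) r0 dl0 conv lowL hup.
    have ev : \forall a \near 0^'+, Esg Om T' a (phi a) = +oo%E.
      apply: filterS nr => a nP; rewrite /Esg; case: asboolP => // /nP [].
    by rewrite einf_pinfty ?leey.
- move=> f hf; exists (fun _ => f); split; first by move=> a _.
  split.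
  + rewrite /strong_cvg0.
    have -> : (fun a : R => (\int[@lebST R]_(z in cyl Om T') ((f z - f z) ^+ 2)%:E)%E) = fun _ => 0%E.
      apply/funext => a; rewrite (eq_integral (fun _ => 0%E)) ?integral0 // => z _.
      by rewrite subrr expr0n.
    exact: cvg_cst.
  + rewrite /IK; case: asboolP => [[_ fK]|_]; last by rewrite leey.
    apply: (@esup_le0 _ _ (32 * m)) => a a0 a1.
    rewrite /Esg; case: asboolP => [_|nb]; last first.
      exfalso; apply: nb; apply: ae_mono fK => z h Dz.
      by apply: le_trans (h Dz) _; rewrite lerDl ltW.
    apply: le_trans (@int_upper _ _ _ (@lebST R) _ mD m muDE (fun z => Wsg a (f z)) (32 * a) _ _ _) _.
    * exact: measurableT_comp (@Wsg_meas R a) hf.1.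
    * by rewrite mulr_ge0 // ltW.
    * apply: ae_mono fK => z h Dz; apply: Wsg_le => //; first exact: ltW.
      by apply: le_trans (h Dz) _; rewrite lerDl ltW.
    * by rewrite lee_fin mulrAC.
Qed.
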